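(* The string rewriting system $\mathcal{F}=D_F\cup A\cup B$ is terminating, where $D_F=\{1_3\rhd\to\rhd,\ 0_30_2\rhd\to 0_3\rhd,\ 1_30_2\rhd\to1_3\rhd,\ 1_31_2\rhd\to1_32_3\rhd,\ 2_31_2\rhd\to2_32_3\rhd\}$.
   Context: An SRS induces $u\ell v\to urv$ for each rule $\ell\to r$; terminating means no infinite rewrite sequence. Alphabet $\{0_2,1_2,0_3,1_3,2_3,\lhd,\rhd\}$; $A=\{0_20_3\to0_30_2,\ 0_21_3\to0_31_2,\ 0_22_3\to1_30_2,\ 1_20_3\to1_31_2,\ 1_21_3\to2_30_2,\ 1_22_3\to2_31_2\}$; $B=\{\lhd0_3\to\lhd1_2,\ \lhd1_3\to\lhd0_20_2,\ \lhd2_3\to\lhd0_21_2\}$. *)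

(* Defs.v *)
From Stdlib Require Import List.
Import ListNotations.

Inductive sym : Type :=
| z2 | o2
| z3 | o3 | t3
| lt (* left end marker  <| *) | rt (* right end marker |> *).

Definition word := list sym.

Definition srs := list (word * word).

Definition rewrite_step (R : srs) (s t : word) : Prop :=
  exists u v l r, In (l, r) R /\ s = u ++ l ++ v /\ t = u ++ r ++ v.

Definition terminating (R : srs) : Prop :=
  ~ exists f : nat -> word, forall n, rewrite_step R (f n) (f (S n)).

Definition A_rules : srs :=
  [ ([z2; z3], [z3; z2]);
    ([z2; o3], [z3; o2]);
    ([z2; t3], [o3; z2]);
    ([o2; z3], [o3; o2]);
    ([o2; o3], [t3; z2]);
    ([o2; t3], [t3; o2]) ].

Definition B_rules : srs :=
  [ ([lt; z3], [lt; o2]);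
    ([lt; o3], [lt; z2; z2]);
    ([lt; t3], [lt; z2; o2]) ].

Definition DF_rules : srs :=
  [ ([o3; rt], [rt]);
    ([z3; z2; rt], [z3; rt]);
    ([o3; z2; rt], [o3; rt]);
    ([o3; o2; rt], [o3; t3; rt]);
    ([t3; o2; rt], [t3; t3; rt]) ].

Definition F_rules : srs := DF_rules ++ A_rules ++ B_rules.

(* Main.v *)
Require Import Defs.
From Stdlib Require Import List Arith Lia ConstructiveEpsilon Classical.
Import ListNotations.

Definition f n := if n mod 3 =? 1 then n / 3 else if Nat.even n then n / 2 else (3*n+1)/2.

Fixpoint it k n := match k with 0 => n | S k => it k (f n) end.

Lemma it_add : forall j k n, it (j + k) n = it k (it j n).
Proof. induction j; intros; simpl; auto. Qed.

Lemma modE a b q r : r < b -> a = b*q + r -> a mod b = r.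
Proof. intros. symmetry. eapply Nat.mod_unique; eauto. Qed.
Lemma divE a b q r : r < b -> a = b*q + r -> a / b = q.
Proof. intros. symmetry. eapply Nat.div_unique; eauto. Qed.

Lemma fa n q : n = 3*q+1 -> f n = q.
Proof. intros H. unfold f. rewrite (modE n 3 q 1) by lia. simpl.
  apply (divE n 3 q 1); lia. Qed.

Lemma fe n q : n = 2*q -> n mod 3 <> 1 -> f n = q.
Proof. intros H H3. unfold f. destruct (Nat.eqb_spec (n mod 3) 1); [lia|].
  replace (Nat.even n) with true by (symmetry; apply Nat.even_spec; exists q; lia).
  apply (divE n 2 q 0); lia. Qed.

Lemma fo n q : n = 2*q+1 -> n mod 3 <> 1 -> f n = 3*q+2.
Proof. intros H H3. unfold f. destruct (Nat.eqb_spec (n mod 3) 1); [lia|].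
  replace (Nat.even n) with false.
  - apply (divE _ 2 _ 0); lia.
  - symmetry. rewrite <- Nat.negb_odd. rewrite (proj2 (Nat.odd_spec n)) by (exists q; lia). reflexivity. Qed.

Lemma mod3_ne1 n q r : n = 3*q + r -> r < 3 -> r <> 1 -> n mod 3 <> 1.
Proof. intros. rewrite (modE n 3 q r); auto. Qed.

Lemma pow_pos b k : 1 <= b -> 1 <= b ^ k.
Proof. intros. induction k; simpl; nia. Qed.

Lemma decomp : forall n, 1 <= n -> exists a m, n = 2^a * (2*m+1).
Proof.
  intro n. induction n as [n IH] using (well_founded_induction lt_wf). intros Hn.
  destruct (Nat.Even_or_Odd n) as [[p Hp]|[p Hp]].
  - destruct (IH p ltac:(lia) ltac:(lia)) as [a [m Ha]].
    exists (S a), m. simpl. lia.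
  - exists 0, p. simpl. lia.
Qed.

Lemma up : forall b c, 1 <= c -> (2^(S b) * c - 1) mod 3 <> 1 ->
  it (S b) (2^(S b) * c - 1) = 3^(S b) * c - 1.
Proof.
  induction b; intros c Hc Hm.
  - simpl. rewrite (fo _ (c - 1)); [| simpl in Hm; lia | simpl in Hm; auto]. simpl. lia.
  - change (it (S (S b)) (2 ^ S (S b) * c - 1)) with (it (S b) (f (2 ^ S (S b) * c - 1))).
    assert (HP := pow_pos 2 b ltac:(lia)).
    set (P := 2^b * c) in *.
    assert (E2 : 2 ^ S (S b) * c = 2 * (2 * P)) by (unfold P; simpl; lia).
    rewrite E2. rewrite E2 in Hm.
    assert (HPc : 1 <= P) by (unfold P; nia).
    rewrite (fo _ (2*P - 1)); [| lia | auto].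
    replace (3 * (2*P-1) + 2) with (2 ^ S b * (3*c) - 1) by (unfold P; simpl; lia).
    rewrite IHb; [ | lia | ].
    + simpl. lia.
    + apply (mod3_ne1 _ (2 ^ S b * c - 1) 2); [ | lia | lia]. unfold P in *. simpl in *. lia.
Qed.

Lemma pow3_odd : forall k, exists t, 3^k = 2*t+1.
Proof. induction k. - exists 0; reflexivity. - destruct IHk as [t Ht]. exists (3*t+1). simpl. lia. Qed.

Lemma down : forall k y r, 2*y+1 = 3^k*(2*r+1) -> it k y = r.
Proof.
  induction k; intros y r H.
  - simpl in *. lia.
  - simpl. set (Z := 3^k*(2*r+1)) in *.
    assert (HZ : 2*y+1 = 3*Z) by (unfold Z in *; simpl in H; lia).
    destruct (Nat.Even_or_Odd Z) as [[q Hq]|[q Hq]]; [lia|].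
    rewrite (fa y q) by lia. apply IHk. unfold Z in Hq. lia.
Qed.

Lemma descent : forall N, 2 <= N -> exists j, it j N < N.
Proof.
  intros N HN.
  destruct (Nat.eq_dec (N mod 3) 1) as [H1|H1].
  { exists 1. simpl. rewrite (fa N (N/3)). - apply Nat.div_lt; lia.
    - pose proof (Nat.div_mod_eq N 3). lia. }
  destruct (Nat.Even_or_Odd N) as [[q Hq]|[q Hq]].
  { exists 1. simpl. rewrite (fe N q); auto. lia. }
  destruct (decomp (N+1) ltac:(lia)) as [a [m Ha]].
  destruct a as [|b].
  { simpl in Ha. lia. }
  assert (Hup : it (S b) N = 3^(S b) * (2*m+1) - 1).
  { replace N with (2^(S b) * (2*m+1) - 1) by lia. apply up; [lia|]. 
    replace (2 ^ S b * (2 * m + 1) - 1) with N by lia. auto. }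
  destruct (pow3_odd (S b)) as [t Ht].
  set (Z := 3^(S b) * (2*m+1)) in *.
  assert (HZo : Z = 2*(2*t*m + t + m) + 1) by (unfold Z; rewrite Ht; nia).
  assert (HZ3 : Z = 3 * (3^b * (2*m+1))) by (unfold Z; simpl; lia).
  exists (S b + (1 + S b)).
  rewrite it_add, Hup, it_add. simpl it at 2.
  rewrite (fe _ (2*t*m + t + m)); [ | lia | ].
  - rewrite (down (S b) _ m).
    + assert (H2 := pow_pos 2 b ltac:(lia)). simpl in Ha. nia.
    + fold Z. lia.
  - apply (mod3_ne1 _ (3^b*(2*m+1) - 1) 2); [| lia | lia].
    assert (1 <= 3^b*(2*m+1)) by (assert (H3 := pow_pos 3 b ltac:(lia)); nia). lia.
Qed.

Lemma converge : forall n, exists k, it k n <= 1.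
Proof.
  intro n. induction n as [n IH] using (well_founded_induction lt_wf).
  destruct (le_lt_dec n 1) as [H|H]. { exists 0. simpl. auto. }
  destruct (descent n H) as [j Hj]. destruct (IH _ Hj) as [k Hk].
  exists (j + k). rewrite it_add. auto.
Qed.

Definition Pn n k := it k n <= 1.
Definition Qn n k := Pn n k /\ forall j, j < k -> ~ Pn n j.

Lemma Pn_dec n k : {Pn n k} + {~ Pn n k}.
Proof. unfold Pn. apply le_dec. Qed.

Lemma bdec : forall n k, {forall j, j < k -> ~ Pn n j} + {~ forall j, j < k -> ~ Pn n j}.
Proof.
  intros n k. induction k.
  - left. intros. lia.
  - destruct IHk as [H|H].
    + destruct (Pn_dec n k) as [H'|H'].
      * right. intro C. apply (C k); auto.
      * left. intros j Hj. destruct (Nat.eq_dec j k); [subst; auto| apply H; lia].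
    + right. intro C. apply H. intros j Hj. apply C. lia.
Qed.

Lemma Qn_dec n k : {Qn n k} + {~ Qn n k}.
Proof.
  unfold Qn. destruct (Pn_dec n k); [|right; tauto].
  destruct (bdec n k); [left|right]; tauto.
Qed.

Lemma Qn_ex n : exists k, Qn n k.
Proof.
  destruct (converge n) as [k Hk].
  induction k as [k IH] using (well_founded_induction lt_wf).
  destruct (bdec n k) as [H|H].
  - exists k. split; auto.
  - apply NNPP. intro C. apply H. intros j Hj Pj. 
    apply C. apply (IH j Hj Pj).
Qed.

Definition sig (n : nat) : nat :=
  proj1_sig (constructive_indefinite_ground_description_nat (Qn n) (Qn_dec n) (Qn_ex n)).

Lemma sig_spec n : Qn n (sig n).
Proof. unfold sig. destruct (constructive_indefinite_ground_description_nat _ _ _); auto. Qed.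

Lemma sig_lt : forall n m, 2 <= n -> f n = m -> sig m < sig n.
Proof.
  intros n m Hn Hf.
  destruct (sig_spec n) as [P1 M1]. destruct (sig_spec m) as [P2 M2].
  destruct (sig n) as [|k] eqn:E.
  - unfold Pn in P1. simpl in P1. lia.
  - unfold Pn in P1. simpl in P1. rewrite Hf in P1.
    destruct (le_lt_dec (sig m) k) as [H|H]; [lia|].
    exfalso. apply (M2 k H). exact P1.
Qed.

Section Fold.
Variable S : Type.
Variable dl : sym -> S -> nat.
Variable tau : sym -> S -> S.
Definition RUN (w : word) (p : nat * S) : nat * S :=
  fold_left (fun q c => (fst q + dl c (snd q), tau c (snd q))) w p.

Lemma RUN_app : forall u v p, RUN (u ++ v) p = RUN v (RUN u p).
Proof. intros. unfold RUN. apply fold_left_app. Qed.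

Lemma RUN_shift : forall v a s, RUN v (a, s) = (a + fst (RUN v (0, s)), snd (RUN v (0, s))).
Proof.
  induction v as [|c v IH]; intros a s; simpl.
  - f_equal; lia.
  - rewrite (IH (a + dl c s)), (IH (0 + dl c s)). simpl. f_equal. lia.
Qed.

Lemma RUN_lt : forall v a a' s, a < a' -> fst (RUN v (a, s)) < fst (RUN v (a', s)).
Proof. intros. rewrite (RUN_shift v a), (RUN_shift v a'). simpl. lia. Qed.
End Fold.
Arguments RUN {S}.

Definition isbin (c : sym) := match c with z2 | o2 => true | _ => false end.
Definition istern (c : sym) := match c with z3 | o3 | t3 => true | _ => false end.

Definition d1 (c : sym) (s : bool * nat) : nat :=
  match c with rt => if fst s then sig (snd s) else 0 | _ => 0 end.
Definition t1 (c : sym) (s : bool * nat) : bool * nat :=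
  let (m, N) := s in
  match c with
  | lt => (true, 1) | rt => (false, 1)
  | z2 => (m, 2*N) | o2 => (m, 2*N+1)
  | z3 => (m, 3*N) | o3 => (m, 3*N+1) | t3 => (m, 3*N+2)
  end.
Definition d2 (c : sym) (s : bool * nat) : nat :=
  match c with rt => if fst s then 0 else snd s | _ => 0 end.
Definition t2 (c : sym) (s : bool * nat) : bool * nat :=
  let (m, k) := s in
  match c with
  | lt => (true, 0) | rt => (false, 0)
  | z2 | o2 => (m, if m then k else S k)
  | _ => (m, k)
  end.
Definition d3 (c : sym) (s : unit) : nat := if istern c then 1 else 0.
Definition t3' (c : sym) (s : unit) : unit := tt.
Definition d4 (c : sym) (s : nat) : nat := if istern c then s else 0.
Definition t4 (c : sym) (s : nat) : nat := if isbin c then S s else s.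

Definition R1 := @RUN _ d1 t1.
Definition R2 := @RUN _ d2 t2.
Definition R3 := @RUN _ d3 t3'.
Definition R4 := @RUN _ d4 t4.

Lemma mode_agree : forall u a a' m N k,
  fst (snd (R1 u (a, (m, N)))) = fst (snd (R2 u (a', (m, k)))).
Proof.
  induction u as [|c u IH]; intros; simpl; auto.
  destruct c; simpl; apply IH.
Qed.

Lemma N_pos : forall u a m N, 1 <= N -> 1 <= snd (snd (R1 u (a, (m, N)))).
Proof.
  induction u as [|c u IH]; intros; simpl; auto.
  destruct c; simpl; apply IH; lia.
Qed.


Lemma fA n x N : n = 3*N+1 -> x = N -> f n = x.
Proof. intros -> ->. apply fa. lia. Qed.
Lemma f6 n x N : n = 6*N -> x = 3*N -> f n = x.
Proof. intros -> ->. apply fe; [lia|]. apply (mod3_ne1 _ (2*N) 0); lia. Qed.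
Lemma f62 n x N : n = 6*N+2 -> x = 3*N+1 -> f n = x.
Proof. intros -> ->. apply fe; [lia|]. apply (mod3_ne1 _ (2*N) 2); lia. Qed.
Lemma f63 n x N : n = 6*N+3 -> x = 9*N+5 -> f n = x.
Proof. intros -> ->. rewrite (fo _ (3*N+1)); [lia|lia|]. apply (mod3_ne1 _ (2*N+1) 0); lia. Qed.
Lemma f65 n x N : n = 6*N+5 -> x = 9*N+8 -> f n = x.
Proof. intros -> ->. rewrite (fo _ (3*N+2)); [lia|lia|]. apply (mod3_ne1 _ (2*N+1) 2); lia. Qed.

Ltac eqs := (repeat match goal with |- (_,_) = (_,_) => f_equal end); first [reflexivity | lia].
Ltac fstep N := first [apply (fA _ _ N); lia | apply (f6 _ _ N); lia | apply (f62 _ _ N); lia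
  | apply (f63 _ _ N); lia | apply (f65 _ _ N); lia].
Ltac close N :=
  first [ left; split; [eqs | apply sig_lt; [lia | fstep N]]
        | left; split; [eqs | lia]
        | right; left; split; [eqs | split; [eqs | lia]]
        | right; right; left; split; [eqs | split; [eqs | lia]]
        | right; right; right; split; [eqs | split; [eqs | split; [eqs | split; [eqs | lia]]]] ].

Definition LEX (l r : word) (m : bool) (N k nb : nat) : Prop :=
  let l1 := R1 l (0,(m,N)) in let r1 := R1 r (0,(m,N)) in
  let l2 := R2 l (0,(m,k)) in let r2 := R2 r (0,(m,k)) in
  let l3 := R3 l (0,tt) in let r3 := R3 r (0,tt) in
  let l4 := R4 l (0,nb) in let r4 := R4 r (0,nb) in
  (snd r1 = snd l1 /\ fst r1 < fst l1) \/
  (r1 = l1 /\ snd r2 = snd l2 /\ fst r2 < fst l2) \/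
  (r1 = l1 /\ r2 = l2 /\ fst r3 < fst l3) \/
  (r1 = l1 /\ r2 = l2 /\ r3 = l3 /\ snd r4 = snd l4 /\ fst r4 < fst l4).

Lemma rules_lex : forall l r, In (l, r) F_rules -> forall m N k nb, 1 <= N -> LEX l r m N k nb.
Proof.
  intros l r H m N k nb HN. unfold F_rules, DF_rules, A_rules, B_rules in H. simpl in H.
  unfold LEX, R1, R2, R3, R4, RUN.
  repeat (destruct H as [H|H]; [injection H; intros; subst; destruct m; simpl; unfold d3, t3', d4, t4, istern, isbin; simpl; close N | ]).
  contradiction.
Qed.

Lemma ctx_lt : forall S (dl : sym -> S -> nat) tau l r v a s,
  snd (RUN dl tau r (0,s)) = snd (RUN dl tau l (0,s)) ->
  fst (RUN dl tau r (0,s)) < fst (RUN dl tau l (0,s)) ->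
  fst (RUN dl tau v (RUN dl tau r (a,s))) < fst (RUN dl tau v (RUN dl tau l (a,s))).
Proof.
  intros. rewrite (RUN_shift _ _ _ r), (RUN_shift _ _ _ l). rewrite H.
  apply RUN_lt. lia.
Qed.

Lemma ctx_eq : forall S (dl : sym -> S -> nat) tau l r v a s,
  RUN dl tau r (0,s) = RUN dl tau l (0,s) ->
  RUN dl tau v (RUN dl tau r (a,s)) = RUN dl tau v (RUN dl tau l (a,s)).
Proof.
  intros. rewrite (RUN_shift _ _ _ r), (RUN_shift _ _ _ l). rewrite H. reflexivity.
Qed.

Definition M1 w := fst (R1 w (0,(false,1))).
Definition M2 w := fst (R2 w (0,(false,0))).
Definition M3 w := fst (R3 w (0,tt)).
Definition M4 w := fst (R4 w (0,0)).

Definition lt4 (x y : nat * nat * nat * nat) : Prop :=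
  let '(a,b,c,d) := x in let '(a',b',c',d') := y in
  a < a' \/ (a = a' /\ (b < b' \/ (b = b' /\ (c < c' \/ (c = c' /\ d < d'))))).

Definition M w := (M1 w, M2 w, M3 w, M4 w).

Lemma step_lex : forall s t, rewrite_step F_rules s t -> lt4 (M t) (M s).
Proof.
  intros s t [u [v [l [r [Hin [Hs Ht]]]]]]. subst.
  unfold M, M1, M2, M3, M4, lt4. unfold R1, R2, R3, R4 in *.
  rewrite !RUN_app.
  destruct (RUN d1 t1 u (0,(false,1))) as [a1 [m N]] eqn:E1.
  destruct (RUN d2 t2 u (0,(false,0))) as [a2 [m' k]] eqn:E2.
  destruct (RUN d3 t3' u (0,tt)) as [a3 []] eqn:E3.
  destruct (RUN d4 t4 u (0,0)) as [a4 nb] eqn:E4.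
  assert (Hm : m = m').
  { pose proof (mode_agree u 0 0 false 1 0) as H. unfold R1, R2 in H.
    rewrite E1, E2 in H. exact H. }
  subst m'.
  assert (HN : 1 <= N).
  { pose proof (N_pos u 0 false 1 ltac:(lia)) as H. unfold R1 in H. rewrite E1 in H. exact H. }
  destruct (rules_lex l r Hin m N k nb HN) as [[A B]|[[A [B C]]|[[A [B C]]|[A [B [C [D G]]]]]]];
  unfold R1, R2, R3, R4 in *.
  - left. apply ctx_lt; auto.
  - right. split. { rewrite (ctx_eq _ _ _ l r v); auto. }
    left. apply ctx_lt; auto.
  - right. split. { rewrite (ctx_eq _ _ _ l r v); auto. }
    right. split. { rewrite (ctx_eq _ _ _ l r v); auto. }
    left. apply ctx_lt; auto. destruct (snd (RUN d3 t3' r (0, tt))), (snd (RUN d3 t3' l (0, tt))). reflexivity.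
  - right. split. { rewrite (ctx_eq _ _ _ l r v); auto. }
    right. split. { rewrite (ctx_eq _ _ _ l r v); auto. }
    right. split. { rewrite (ctx_eq _ _ _ l r v); auto. }
    apply ctx_lt; auto.
Qed.

Lemma no_inf : forall a b c d (g : nat -> word),
  (forall n, rewrite_step F_rules (g n) (g (S n))) -> M (g 0) = (a,b,c,d) -> False.
Proof.
  intro a. induction a as [a IHa] using (well_founded_induction lt_wf).
  intro b. induction b as [b IHb] using (well_founded_induction lt_wf).
  intro c. induction c as [c IHc] using (well_founded_induction lt_wf).
  intro d. induction d as [d IHd] using (well_founded_induction lt_wf).
  intros g Hg HM.
  pose proof (step_lex _ _ (Hg 0)) as H. rewrite HM in H.
  destruct (M (g 1)) as [[[a' b'] c'] d'] eqn:E1.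
  simpl in H.
  assert (Hg' : forall n, rewrite_step F_rules (g (S n)) (g (S (S n)))) by (intro; apply Hg).
  destruct H as [H|[H [H'|[H' [H''|[H'' H''']]]]]]; subst.
  - exact (IHa a' H b' c' d' (fun n => g (S n)) Hg' E1).
  - exact (IHb b' H' c' d' (fun n => g (S n)) Hg' E1).
  - exact (IHc c' H'' d' (fun n => g (S n)) Hg' E1).
  - exact (IHd d' H''' (fun n => g (S n)) Hg' E1).
Qed.

Theorem mainTheorem11 : terminating F_rules.
Proof.
  intros [g Hg].
  destruct (M (g 0)) as [[[a b] c] d] eqn:E.
  exact (no_inf a b c d g Hg E).
Qed.
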